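(* Assume $\lim_{\epsilon\to0}\frac{h_{ex}}{|\ln\epsilon|}=h_0\in[0,\infty)$. Let $(v_0,\vec A_0)\in V\times K_0$ be a minimizer of $\mathcal G_{h_0}$ and define $$\vec A^\epsilon(x)=|\ln\epsilon|\vec A_0(x)+(h_{ex}-h_0|\ln\epsilon|)\vec a(x).$$ Then $$\hat A^{\epsilon,s}:=\sum_{n=0}^{N-1}\frac{\hat A^\epsilon_n}{|\ln\epsilon|}\chi_n\to\hat A_0\quad\text{in }L^2(D;\mathbb R^2)$$ as $(\epsilon,s)\to(0,0)$, where $\hat A^\epsilon_n(\hat x)=(A^{\epsilon,1}(\hat x,ns),A^{\epsilon,2}(\hat x,ns))$ and $\hat A_0=(A_0^1,A_0^2)$.
   Context: Let $\Omega\subset\mathbb R^2$ be a bounded simply connected smooth domain, $L>0$, $D=\Omega\times(0,L)$, $s=L/N$ with $N$ a positive integer; $h_{ex}=h_{ex}(\epsilon)>0$. Points are $x=(\hat x,x_3)$; for $\vec A=(A^1,A^2,A^3)$, $\hat A=(A^1,A^2)$. $\vec a(x)=\frac12(-x_2,x_1,0)$. $\check H^1(\mathbb R^3;\mathbb R^3)$ is the completion of $C_c^\infty(\mathbb R^3;\mathbb R^3)$ under $(\int|\nabla\vec C|^2)^{1/2}$. $E_0:=\{\vec C\in H^1_{loc}(\mathbb R^3;\mathbb R^3):\nabla\times\vec C-h_0\vec e_3\in L^2\}$, $K_0:=\{\vec C\in E_0:\nabla\cdot\vec C=0,\ \vec C-h_0\vec a\in\check H^1\cap L^6(\mathbb R^3;\mathbb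 R^3)\}$. $\operatorname{curl}v=\partial_1v^2-\partial_2v^1$; $V:=\{v\in L^2(D;\mathbb R^2):\operatorname{curl}v\text{ is a finite Radon measure on }D\}$. $\mathcal G_{h_0}(v,\vec A)=\frac12\big[\|v-\hat A\|^2_{L^2(D)}+|\operatorname{curl}v|(D)+\|\nabla\times\vec A-h_0\vec e_3\|^2_{L^2(\mathbb R^3)}\big]$ (with $+\infty$ if $\operatorname{curl}v$ is not a finite measure). The components $A_0^1,A_0^2$ of a minimizer are continuous, so their traces on the planes $x_3=ns$ are defined classically. $\chi_0=\chi_{(0,s)}(x_3)$, $\chi_n=\chi_{[ns,(n+1)s)}(x_3)$ for $1\le n\le N-1$. *)

(* Defs.v *)
From HB Require Import structures.
From mathcomp Require Import all_boot all_order all_algebra.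
From mathcomp Require Import all_classical all_reals all_analysis.
Import Order.TTheory GRing.Theory Num.Theory.
Import numFieldNormedType.Exports.
Local Open Scope classical_set_scope.
Local Open Scope ring_scope.

Set Implicit Arguments.
Unset Strict Implicit.
Unset Printing Implicit Defensive.

Section Defs.
Context {R : realType}.

(* Points of R^2 and R^3; x = ((x1, x2), x3), so x.1 is \hat x. *)
Definition P2 := (R * R)%type.
Definition P3 := (P2 * R)%type.
Definition pt (a b c : R) : P3 := ((a, b), c).

Definition mu3 := ((@lebesgue_measure R \x @lebesgue_measure R) \x @lebesgue_measure R)%E.

(* components (0-based) and standard basis of R^3 *)
Definition comp (i : nat) (y : P3) : R :=
  match i with 0 => y.1.1 | 1 => y.1.2 | _ => y.2 end.
Definition ev (j : nat) : P3 :=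
  match j with 0 => pt 1 0 0 | 1 => pt 0 1 0 | _ => pt 0 0 1 end.

Definition iterD {V : normedModType R} (vs : seq V) (f : V -> R) : V -> R :=
  foldr (fun v g => 'D_v g) f vs.
Definition smooth {V : normedModType R} (f : V -> R) : Prop :=
  forall vs : seq V, continuous (iterD vs f) /\
    (forall (v x : V), derivable (iterD vs f) x v).

Definition test_fun (U : set P3) (phi : P3 -> R) : Prop :=
  smooth phi /\ exists K : set P3, [/\ compact K, K `<=` U &
    forall x, ~ K x -> phi x = 0].

Definition sqL2 (E : set P3) (f : P3 -> R) : \bar R :=
  (\int[mu3]_(x in E) ((f x) ^+ 2)%:E)%E.
Definition inL2 (E : set P3) (f : P3 -> R) : Prop :=
  measurable_fun E f /\ (sqL2 E f < +oo)%E.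
Definition inL6 (f : P3 -> R) : Prop :=
  measurable_fun [set: P3] f /\ (\int[mu3]_x ((f x) ^+ 6)%:E < +oo)%E.
Definition box (r : R) : set P3 :=
  [set x | `|x.1.1| <= r /\ `|x.1.2| <= r /\ `|x.2| <= r].
Definition locL2 (f : P3 -> R) : Prop := forall r : R, inL2 (box r) f.

Definition weak_partial (f g : P3 -> R) (j : nat) : Prop :=
  forall phi, test_fun [set: P3] phi ->
    (\int[mu3]_x (f x * 'D_(ev j) phi x)%:E = - \int[mu3]_x (g x * phi x)%:E)%E.

(* C in H^1_loc(R^3;R^3) with weak gradient G (G i j = d_j C^i) *)
Definition H1loc_grad (C : P3 -> P3) (G : nat -> nat -> P3 -> R) : Prop :=
  forall i, (i < 3)%N -> locL2 (comp i \o C) /\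
    forall j, (j < 3)%N -> locL2 (G i j) /\ weak_partial (comp i \o C) (G i j) j.

Definition curlG (G : nat -> nat -> P3 -> R) (i : nat) (x : P3) : R :=
  match i with
  | 0 => G 2%N 1%N x - G 1%N 2%N x
  | 1 => G 0%N 2%N x - G 2%N 0%N x
  | _ => G 1%N 0%N x - G 0%N 1%N x
  end.

Definition mag (h0 : R) (G : nat -> nat -> P3 -> R) : \bar R :=
  (\int[mu3]_x ((curlG G 0 x) ^+ 2 + (curlG G 1 x) ^+ 2
                 + (curlG G 2 x - h0) ^+ 2)%:E)%E.

Definition E0 (h0 : R) (C : P3 -> P3) (G : nat -> nat -> P3 -> R) : Prop :=
  H1loc_grad C G /\ (forall i, (i < 3)%N -> measurable_fun [set: P3] (curlG G i))
  /\ (mag h0 G < +oo)%E.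

Definition div_free (C : P3 -> P3) : Prop :=
  forall phi, test_fun [set: P3] phi ->
    (\int[mu3]_x (comp 0 (C x) * 'D_(ev 0) phi x + comp 1 (C x) * 'D_(ev 1) phi x
                  + comp 2 (C x) * 'D_(ev 2) phi x)%:E = 0)%E.

(* u in  \check H^1(R^3;R^3) \cap L^6(R^3;R^3): u in L^6, u has a weak
   gradient Gu in L^2, and Gu is an L^2-limit of gradients of C_c^infinity fields *)
Definition Hcheck_L6 (u : P3 -> P3) : Prop :=
  exists Gu : nat -> nat -> P3 -> R,
    [/\ H1loc_grad u Gu,
        (forall i, (i < 3)%N -> inL6 (comp i \o u)),
        (forall i j, (i < 3)%N -> (j < 3)%N -> inL2 [set: P3] (Gu i j)) &
        forall eta : R, 0 < eta -> exists Phi : P3 -> P3,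
          (forall i, (i < 3)%N -> test_fun [set: P3] (comp i \o Phi)) /\
          (\int[mu3]_x (\sum_(i < 3) \sum_(j < 3)
               ('D_(ev j) (comp i \o Phi) x - Gu i j x) ^+ 2)%:E < eta%:E)%E].

Definition avec (x : P3) : P3 := pt (- x.1.2 / 2) (x.1.1 / 2) 0.

(* K_0 (with the weak gradient G of C as a witness) *)
Definition K0 (h0 : R) (C : P3 -> P3) (G : nat -> nat -> P3 -> R) : Prop :=
  [/\ E0 h0 C G, div_free C & Hcheck_L6 (fun x => C x - h0 *: avec x)].

Definition cyl (Om : set P2) (L : R) : set P3 := [set x | Om x.1 /\ 0 < x.2 < L].

Definition curlTV (D : set P3) (v : P3 -> P2) : \bar R :=
  ereal_sup [set (\int[mu3]_(x in D)
                    ((v x).1 * 'D_(ev 1) phi x - (v x).2 * 'D_(ev 0) phi x)%:E)%E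
            | phi in [set phi | test_fun D phi /\ forall x, `|phi x| <= 1]].

Definition inV (D : set P3) (v : P3 -> P2) : Prop :=
  [/\ inL2 D (fun x => (v x).1), inL2 D (fun x => (v x).2) & (curlTV D v < +oo)%E].

Definition Gfun (h0 : R) (D : set P3) (v : P3 -> P2) (A : P3 -> P3)
    (G : nat -> nat -> P3 -> R) : \bar R :=
  ((2^-1)%:E * ((\int[mu3]_(x in D) (((v x).1 - (A x).1.1) ^+ 2
                                    + ((v x).2 - (A x).1.2) ^+ 2)%:E)
                + curlTV D v + mag h0 G))%E.

Definition is_minimizer (h0 : R) (D : set P3) (v0 : P3 -> P2) (A0 : P3 -> P3) : Prop :=
  inV D v0 /\ exists G0, K0 h0 A0 G0 /\
    forall v C G, inV D v -> K0 h0 C G -> (Gfun h0 D v0 A0 G0 <= Gfun h0 D v C G)%E.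

Definition bounded_set2 (S : set P2) : Prop := exists M : R, forall x, S x -> `|x| < M.

Definition simply_connected (S : set P2) : Prop :=
  forall g : R -> P2, {within `[0, 1]%classic, continuous g} ->
    (forall t, `[0, 1]%classic t -> S (g t)) -> g 0 = g 1 ->
    exists H : P2 -> P2,
      [/\ {within (`[0, 1]%classic `*` `[0, 1]%classic), continuous H},
          (forall t s, `[0, 1]%classic t -> `[0, 1]%classic s -> S (H (t, s))),
          (forall t, `[0, 1]%classic t -> H (t, 0) = g t),
          (forall t, `[0, 1]%classic t -> H (t, 1) = g 0) &
          (forall s, `[0, 1]%classic s -> H (0, s) = g 0 /\ H (1, s) = g 0)].

Definition smooth_boundary (S : set P2) : Prop :=
  forall p, closure S p -> ~ S p ->
    exists r : R, 0 < r /\ exists rho : P2 -> R,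
      [/\ smooth rho, rho p = 0,
          ('D_((1 : R), (0 : R)) rho p != 0 \/ 'D_((0 : R), (1 : R)) rho p != 0) &
          forall x, ball p r x -> (S x <-> rho x < 0)].

Definition smooth_sc_domain (S : set P2) : Prop :=
  [/\ open S, S !=set0, connected S, bounded_set2 S &
      (simply_connected S /\ smooth_boundary S)].

Definition Aeps (hex : R -> R) (h0 : R) (A0 : P3 -> P3) (e : R) (x : P3) : P3 :=
  `|ln e| *: A0 x + (hex e - h0 * `|ln e|) *: avec x.

Definition chi (s : R) (n : nat) (t : R) : R :=
  (if n == 0%N then (0 < t) && (t < s)
   else (n%:R * s <= t) && (t < n.+1%:R * s))%:R.

Definition Ahat_es (hex : R -> R) (h0 : R) (A0 : P3 -> P3) (L e : R) (N : nat)
    (x : P3) : P2 :=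
  let s := L / N%:R in
  (\sum_(n < N) ((Aeps hex h0 A0 e (pt x.1.1 x.1.2 (n%:R * s))).1.1 / `|ln e|) * chi s n x.2,
   \sum_(n < N) ((Aeps hex h0 A0 e (pt x.1.1 x.1.2 (n%:R * s))).1.2 / `|ln e|) * chi s n x.2).

End Defs.

(* Main.v *)
Require Import Defs.
From HB Require Import structures.
From mathcomp Require Import all_boot all_order all_algebra.
From mathcomp Require Import all_classical all_reals all_analysis.
From mathcomp Require Import ring lra.
Import Order.TTheory GRing.Theory Num.Theory.
Import numFieldNormedType.Exports.
Local Open Scope classical_set_scope.
Local Open Scope ring_scope.

Lemma unif_cont_compact (R : realType) (T : pseudoMetricType R) (K : set T) (f : T -> R) :
  compact K -> continuous f -> forall eps : R, 0 < eps ->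
  exists2 d : R, 0 < d & forall x y, K x -> K y -> ball x d y -> `|f x - f y| < eps.
Proof.
move=> /compact_near_coveringP cK fc eps eps0.
have H := cK R (0:R)^'+ (fun d x => forall y, K y -> ball x d y -> `|f x - f y| < eps) _.
have : \forall d \near (0:R)^'+, K `<=` (fun x => forall y, K y -> ball x d y -> `|f x - f y| < eps).
  apply: H => p Kp.
  have e20 : 0 < eps / 2 by rewrite divr_gt0.
  have := fc p; move=> /cvgrPdist_lt/(_ _ e20) /nbhs_ballP [r r0 Hr].
  have r20 : 0 < r / 2 by rewrite divr_gt0.
  near=> x' i => y Ky bxy.
  have hx' : ball p (r/2) x' by near: x'; exact: nbhsx_ballx.
  have hi : i < r/2 by near: i; exact: nbhs_right_lt.
  have hy : ball p r y.
    rewrite (splitr r); apply: ball_triangle hx' _.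
    by apply: le_ball bxy; exact: ltW.
  have h1 := Hr _ hy; have h2 := Hr _ (le_ball (ltW _) hx').
  rewrite /= in h1 h2.
  have -> : f x' - f y = (f p - f y) - (f p - f x') by ring.
  rewrite (splitr eps); apply: (le_lt_trans (ler_normB _ _)).
  have hr : r / 2 < r by lra.
  by rewrite ltrD // h2.
move=> H2; near (0:R)^'+ => d.
exists d; first by near: d; exact: nbhs_right_gt.
move=> x y Kx Ky; exact: (near H2 d).
Unshelve. all: by end_near.
Qed.

Lemma int_le_cst d (T : measurableType d) (R : realType) (mu : {measure set T -> \bar R})
  (D K : set T) (f : T -> R) (C : R) : 0 <= C ->
  measurable K -> D `<=` K -> (forall x, D x -> 0 <= f x <= C) ->
  (\int[mu]_(x in D) (f x)%:E <= C%:E * mu K)%E.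
Proof.
move=> C0 mK DK fC.
rewrite -integral_cst //.
rewrite ge0_integralE; last by move=> x /fC /andP [h _]; rewrite lee_fin.
rewrite ge0_integralE; last by move=> x _; rewrite lee_fin; exact: C0.
apply: ereal_sup_le => _ [h /= hle <-]; exists h => //= x.
apply: le_trans (hle x) _.
rewrite /patch; case: ifPn => xD.
  have Dx : D x by move: xD; rewrite inE.
  have -> : x \in K by rewrite inE; exact: DK.
  by move: (fC x Dx) => /andP [_ h']; rewrite lee_fin.
case: ifPn => _ /=.
  by rewrite lee_fin C0.
done.
Qed.

Lemma leb_itv (R : realType) (a b : R) : a < b -> lebesgue_measure (`[a, b] : set R) = (b - a)%:E.
Proof. by move=> ab; rewrite lebesgue_measure_itv /= lte_fin ab -EFinB. Qed.

Lemma mu3_box (R : realType) (M L : R) : 0 < M -> 0 < L ->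
  measurable ((`[-M, M] `*` `[-M, M]) `*` `[0, L] : set (@P3 R)) /\
  @mu3 R ((`[-M, M] `*` `[-M, M]) `*` `[0, L]) = ((M + M) * (M + M) * L)%:E.
Proof.
move=> M0 L0.
have mI : forall a b : R, measurable (`[a, b] : set R) by move=> a b; exact: measurable_itv.
split.
  apply: measurableX; last exact: mI.
  apply: measurableX; exact: mI.
rewrite /mu3 /= (@product_measure1E _ _ _ _ R (lebesgue_measure \x lebesgue_measure)%E lebesgue_measure) //; last by apply: measurableX; exact: mI.
have E1 : (lebesgue_measure \x lebesgue_measure)%E (`[-M, M] `*` `[-M, M] : set (R * R)) = ((M+M)*(M+M))%:E.
  have := (@product_measure1E _ _ _ _ R lebesgue_measure lebesgue_measure (`[-M, M]) (`[-M, M]) (mI _ _) (mI _ _)).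
  move=> ->.
  have h : lebesgue_measure (`[-M, M] : set R) = (M + M)%:E by rewrite leb_itv ?opprK //; lra.
  rewrite EFinM; congr (_ * _)%E; exact: h.
rewrite EFinM; congr (_ * _)%E; first exact: E1.
have h : lebesgue_measure (`[0, L] : set R) = L%:E by rewrite leb_itv ?subr0.
exact: h.
Qed.

Lemma chi_tele (R : realType) (s t : R) n : 0 < s -> 0 < t ->
  chi s n t = (((n%:R * s <= t)%R)%:R - ((n.+1%:R * s <= t)%R)%:R : R).
Proof.
move=> s0 t0; rewrite /chi; case: n => [|n] /=.
  rewrite mul0r mul1r (ltW t0) t0 /=.
  by rewrite ltNge; case: leP => h /=; rewrite ?subrr ?subr0.
have hle : n.+1%:R * s <= n.+2%:R * s by rewrite ler_pM2r // ler_nat.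
by case: (leP (n.+1%:R * s) t) => h; case: (ltP t (n.+2%:R * s)) => h' /=;
  case: (leP (n.+2%:R * s) t) => h'' /=; rewrite ?subrr ?subr0 //; lra.
Qed.

Lemma chi_sum (R : realType) (L t : R) (N : nat) : (0 < N)%N -> 0 < t < L ->
  \sum_(n < N) chi (L / N%:R) n t = 1.
Proof.
move=> N0 /andP [t0 tL].
have s0 : 0 < L / N%:R by rewrite divr_gt0 ?ltr0n //; lra.
pose F := fun n : nat => (((n%:R * (L / N%:R) <= t)%R)%:R : R).
rewrite (eq_bigr (fun n : 'I_N => - (F n.+1 - F n))); last by move=> n _; rewrite chi_tele // opprB.
rewrite sumrN -(big_mkord xpredT (fun n => F n.+1 - F n)) telescope_sumr // opprB /F mul0r (ltW t0).
have -> : N%:R * (L / N%:R) = L by rewrite mulrC -mulrA mulVf ?mulr1 // pnatr_eq0 -lt0n.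
have -> : (L <= t)%R = false by apply/negbTE; rewrite -ltNge.
by rewrite subr0.
Qed.

Lemma chi_cases (R : realType) (s t : R) n : 0 < s -> 0 < t ->
  chi s n t = 0 \/ (chi s n t = 1 /\ n%:R * s <= t < n.+1%:R * s).
Proof.
move=> s0 t0; rewrite chi_tele //.
have hle : n%:R * s <= n.+1%:R * s by rewrite ler_pM2r // ler_nat.
case: (leP (n%:R * s) t) => h1; case: (leP (n.+1%:R * s) t) => h2 /=.
- by left; rewrite subrr.
- by right; rewrite subr0; split => //; apply/andP.
- exfalso; lra.
- by left; rewrite subrr.
Qed.

Lemma chi_bound (R : realType) (L t : R) (N : nat) (a : nat -> R) (A G : R) :
  (0 < N)%N -> 0 < t < L -> 0 <= G ->
  (forall n, (n < N)%N -> n%:R * (L / N%:R) <= t < n.+1%:R * (L / N%:R) -> `|a n - A| <= G) ->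
  `|\sum_(n < N) a n * chi (L / N%:R) n t - A| <= G.
Proof.
move=> N0 tL G0 H.
have s0 : 0 < L / N%:R by rewrite divr_gt0 ?ltr0n //; case/andP: tL => ? ?; lra.
have t0 : 0 < t by case/andP: tL.
have -> : A = \sum_(n < N) A * chi (L / N%:R) n t by rewrite -mulr_sumr chi_sum // mulr1.
rewrite -sumrB; apply: le_trans (ler_norm_sum _ _ _) _.
apply: (@le_trans _ _ (\sum_(n < N) G * chi (L / N%:R) n t)); last first.
  by rewrite -mulr_sumr chi_sum // mulr1.
apply: ler_sum => n _.
rewrite -mulrBl normrM.
case: (@chi_cases R _ _ n s0 t0) => [->|[-> hn]].
 rewrite mulr0 (normr0 R) mulr0 //.
by rewrite normr1 !mulr1; apply: H.
Qed.

Lemma lt2le (R : realType) (a x b : R) : a < x < b -> a <= x <= b.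
Proof. by case/andP => h1 h2; rewrite (ltW h1) (ltW h2). Qed.

Lemma Aeps_comp1 (R : realType) (hex : R -> R) (h0 : R) (A0 : @P3 R -> @P3 R) e p :
  ln e != 0 ->
  (Aeps hex h0 A0 e p).1.1 / `|ln e| = (A0 p).1.1 + (hex e / `|ln e| - h0) * (- p.1.2 / 2).
Proof.
move=> l0; have n0 : `|ln e| != 0 by rewrite normr_eq0.
rewrite /Aeps /avec /= /GRing.scale /=; field; exact: n0.
Qed.

Lemma Aeps_comp2 (R : realType) (hex : R -> R) (h0 : R) (A0 : @P3 R -> @P3 R) e p :
  ln e != 0 ->
  (Aeps hex h0 A0 e p).1.2 / `|ln e| = (A0 p).1.2 + (hex e / `|ln e| - h0) * (p.1.1 / 2).
Proof.
move=> l0; have n0 : `|ln e| != 0 by rewrite normr_eq0.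
rewrite /Aeps /avec /= /GRing.scale /=; field; exact: n0.
Qed.

Theorem theorem5p1 (R : realType) (Om : set (R * R)) (L : R) (hex : R -> R) (h0 : R)
    (v0 : (R * R) * R -> R * R) (A0 : (R * R) * R -> (R * R) * R) :
  smooth_sc_domain Om -> 0 < L ->
  (forall e : R, 0 < e -> 0 < hex e) ->
  0 <= h0 ->
  (hex e / `|ln e|) @[e --> 0^'+] --> h0 ->
  is_minimizer h0 (cyl Om L) v0 A0 ->
  continuous (fun x => (A0 x).1.1) -> continuous (fun x => (A0 x).1.2) ->
  forall eta : R, 0 < eta -> exists delta : R, 0 < delta /\
    forall (e : R) (N : nat), 0 < e < delta -> (0 < N)%N -> L / N%:R < delta ->
      (\int[mu3]_(x in cyl Om L)
          (((Ahat_es hex h0 A0 L e N x).1 - (A0 x).1.1) ^+ 2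
           + ((Ahat_es hex h0 A0 L e N x).2 - (A0 x).1.2) ^+ 2)%:E < eta%:E)%E.
Proof.
move=> [_ _ _ [M HM] _] L0 _ _ hlim _ c1 c2 eta eta0.
pose Mb := `|M| + 1.
have Mb0 : 0 < Mb by rewrite /Mb ltr_pwDr.
have HOm : forall x, Om x -> -Mb < x.1 < Mb /\ -Mb < x.2 < Mb.
  move=> x Ox; have := HM x Ox.
  rewrite (_ : `|x| = Num.max `|x.1| `|x.2|) // gt_max => /andP [h1 h2].
  have hM : M <= `|M| by exact: ler_norm.
  by rewrite -!ltr_norml; split; rewrite /Mb; lra.
pose K := ((`[-Mb, Mb] `*` `[-Mb, Mb]) `*` `[0, L] : set (@P3 R)).
have cK : compact K.
  by apply: compact_setX; [apply: compact_setX|]; exact: segment_compact.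
have [mK muK] := @mu3_box R Mb L Mb0 L0.
pose m := (Mb + Mb) * (Mb + Mb) * L.
have m0 : 0 < m by rewrite /m !mulr_gt0 // addr_gt0.
pose g := Num.min 1 (eta / (8 * (m + 1))).
have g0 : 0 < g by rewrite /g lt_min ltr01 /= divr_gt0 // mulr_gt0 // addr_gt0.
have g1 : g <= 1 by rewrite /g ge_min lexx.
have g2 : g <= eta / (8 * (m + 1)) by rewrite /g ge_min lexx orbT.
have [d1 d10 Hd1] := @unif_cont_compact R _ K _ cK c1 g g0.
have [d2 d20 Hd2] := @unif_cont_compact R _ K _ cK c2 g g0.
have gM0 : 0 < g / Mb by rewrite divr_gt0.
have [d3 d30 Hd3] : exists2 d3 : R, 0 < d3 & forall e, 0 < e < d3 -> `|h0 - hex e / `|ln e| | < g / Mb.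
  move/cvgrPdist_lt: hlim => /(_ _ gM0) /nbhs_ballP [d3 d30 Hd3].
  exists d3 => // e /andP [e0 ed]; apply: Hd3 => //.
  by rewrite /ball /= sub0r normrN gtr0_norm.
exists (Num.min (Num.min d1 d2) (Num.min d3 1)); split.
  by rewrite !lt_min d10 d20 d30 ltr01.
move=> e N /andP [e0 ed] N0 sd.
rewrite !lt_min in ed sd.
case/andP: ed => /andP [ed1 ed2] /andP [ed3 e1].
case/andP: sd => /andP [sd1 sd2] /andP [sd3 s1].
pose s := L / N%:R.
have s0 : 0 < s by rewrite divr_gt0 // ltr0n.
have le0 : ln e != 0 by rewrite lt_eqF // ln_lt0 // e0 e1.
have hc : -(g / Mb) < hex e / `|ln e| - h0 < g / Mb.
  by rewrite -ltr_norml distrC; apply: Hd3; rewrite e0 ed3.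
have qM : g / Mb * Mb = g by rewrite divfK // gt_eqF.
have inK : forall y : @P3 R, -Mb <= y.1.1 <= Mb -> -Mb <= y.1.2 <= Mb -> 0 <= y.2 <= L -> K y.
  by move=> y h1 h2 h3; split; [split|] => /=; rewrite in_itv /=.
apply: (@le_lt_trans _ _ ((8 * g ^+ 2)%:E * mu3 K)%E).
  apply: int_le_cst.
  - by rewrite mulr_ge0 // sqr_ge0.
  - exact: mK.
  - move=> x [Ox /andP [x20 x2L]]; have [h1 h2] := HOm _ Ox.
    by apply: inK; [exact: lt2le | exact: lt2le | rewrite (ltW x20) (ltW x2L)].
  - move=> x [Ox /andP [x20 x2L]]; have [/andP [x11a x11b] /andP [x12a x12b]] := HOm _ Ox.
    have Kx : K x.
      by apply: inK; [by rewrite (ltW x11a) (ltW x11b) | by rewrite (ltW x12a) (ltW x12b) | by rewrite (ltW x20) (ltW x2L)].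
    have Hb : forall (f : @P3 R -> R) (k : R),
        (forall y, K y -> ball y (Num.min (Num.min d1 d2) (Num.min d3 1)) x -> `|f y - f x| < g) ->
        -Mb < k < Mb ->
        `|\sum_(n < N) (f (pt x.1.1 x.1.2 (n%:R * s)) + (hex e / `|ln e| - h0) * (k / 2))
              * chi s n x.2 - f x| <= 2 * g.
      move=> f k Hf hk; apply: (@chi_bound R L x.2 N
          (fun n => f (pt x.1.1 x.1.2 (n%:R * s)) + (hex e / `|ln e| - h0) * (k / 2))).
      + exact: N0.
      + by apply/andP.
      + by rewrite mulr_ge0 // ltW.
      move=> n nN /andP [hn1 hn2]; rewrite -/s in hn1 hn2.
      have hnL : n%:R * s <= L by exact: le_trans hn1 (ltW x2L).
      have Kp : K (pt x.1.1 x.1.2 (n%:R * s)).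
        apply: inK => /=; [by rewrite (ltW x11a) (ltW x11b) | by rewrite (ltW x12a) (ltW x12b) | ].
        by rewrite hnL andbT mulr_ge0 // ltW.
      have dpos : 0 < Num.min (Num.min d1 d2) (Num.min d3 1) by rewrite !lt_min d10 d20 d30 ltr01.
      have sdl : s < Num.min (Num.min d1 d2) (Num.min d3 1) by rewrite !lt_min sd1 sd2 sd3 s1.
      have hd : `|n%:R * s - x.2| <= s by rewrite distrC ger0_norm; clear -hn1 hn2; lra.
      have bp : ball (pt x.1.1 x.1.2 (n%:R * s)) (Num.min (Num.min d1 d2) (Num.min d3 1)) x.
        split; [split|] => /=; rewrite /ball /=; last exact: le_lt_trans hd sdl.
          by rewrite subrr normr0.
        by rewrite subrr normr0.
      have := Hf _ Kp bp; rewrite ltr_norml => /andP [H1 H2].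
      have hc1 : -g <= (hex e / `|ln e| - h0) * (k / 2) <= g.
        case/andP: hc => hc1 hc2; case/andP: hk => hk1 hk2.
        set c := hex e / `|ln e| - h0 in hc1 hc2 *; set q := g / Mb in hc1 hc2 qM.
        have p1 : 0 <= (q - c) * (Mb + k) by apply: mulr_ge0; clear -hc1 hc2 hk1 hk2; lra.
        have p2 : 0 <= (q + c) * (Mb - k) by apply: mulr_ge0; clear -hc1 hc2 hk1 hk2; lra.
        have p3 : 0 <= (q + c) * (Mb + k) by apply: mulr_ge0; clear -hc1 hc2 hk1 hk2; lra.
        have p4 : 0 <= (q - c) * (Mb - k) by apply: mulr_ge0; clear -hc1 hc2 hk1 hk2; lra.
        by apply/andP; split; clear -p1 p2 p3 p4 qM; lra.
      by rewrite ler_norml; apply/andP; split; clear -H1 H2 hc1; lra.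
    have mind1 : Num.min (Num.min d1 d2) (Num.min d3 1) <= d1 by rewrite !ge_min lexx.
    have mind2 : Num.min (Num.min d1 d2) (Num.min d3 1) <= d2 by rewrite !ge_min lexx orbT.
    have E1 : (Ahat_es hex h0 A0 L e N x).1 = \sum_(n < N) ((A0 (pt x.1.1 x.1.2 (n%:R * s))).1.1
          + (hex e / `|ln e| - h0) * (- x.1.2 / 2)) * chi s n x.2.
      rewrite /Ahat_es /=; apply: eq_bigr => n _.
      by rewrite -(@Aeps_comp1 R hex h0 A0 e _ le0).
    have E2 : (Ahat_es hex h0 A0 L e N x).2 = \sum_(n < N) ((A0 (pt x.1.1 x.1.2 (n%:R * s))).1.2
          + (hex e / `|ln e| - h0) * (x.1.1 / 2)) * chi s n x.2.
      rewrite /Ahat_es /=; apply: eq_bigr => n _.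
      by rewrite -(@Aeps_comp2 R hex h0 A0 e _ le0).
    have B1 := Hb (fun y => (A0 y).1.1) (- x.1.2)
      (fun y Ky hby => Hd1 y x Ky Kx (le_ball mind1 hby)) ltac:(by clear -x12a x12b; apply/andP; split; lra).
    have B2 := Hb (fun y => (A0 y).1.2) x.1.1
      (fun y Ky hby => Hd2 y x Ky Kx (le_ball mind2 hby)) ltac:(by rewrite x11a x11b).
    rewrite -E1 -E2 /= in B1 B2.
    rewrite ler_norml in B1; rewrite ler_norml in B2.
    case/andP: B1 => B11 B12; case/andP: B2 => B21 B22.
    apply/andP; split; first by rewrite addr_ge0 // sqr_ge0.
    set u := _ - (A0 x).1.1 in B11 B12 *; set w := _ - (A0 x).1.2 in B21 B22 *.
    clear -B11 B12 B21 B22; nra.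
rewrite muK -EFinM lte_fin.
rewrite ler_pdivlMr ?mulr_gt0 ?addr_gt0 // in g2.
have gg : g ^+ 2 <= g by rewrite expr2 ger_pMl.
rewrite -/m.
nra.
Qed.
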